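(* Let $G=(V,E)$ be a finite directed graph with a source $s\in V$, a destination $d\in V$ and an integer time budget $T\ge 0$. Each edge $(i,j)\in E$ carries a travel-time probability mass function $p_{ij}$ supported on the positive integers, with minimum travel time $\delta_{ij}=\min\{t: p_{ij}(t)>0\}\ge 1$. Define the optimal-policy on-time arrival probabilities $u_i:\{0,1,\dots,T\}\to[0,1]$ by $u_d(t)=1$ for all $t$, and for $i\neq d$, $$u_{ij}(t)=\sum_{\tau=\delta_{ij}}^{t} u_j(t-\tau)\,p_{ij}(\tau),\qquad u_i(t)=\max_{j:(i,j)\in E} u_{ij}(t),$$ (with the maximum over an empty set equal to $0$). For a directed path $P$ from $s$ to a node $i$, let $q^P$ be the travel-time distribution along $P$ (the convolution of the $p_{e}$ over the edges $e$ of $P$; for the trivial path $[s]$ it is the point mass at $0$), and let $r^P(T)=\sum_{t=0}^{T} q^P(t)\,u_i(T-t)$. Consider the following best-first search: maintain a max-priority queue $Q$ of entries $(r,(q,P))$; initially $Q$ contains $(u_s(T),(\text{point mass at }0,[s]))$. While $Q$ is nonempty, remove an entry $(r,(q,P))$ with maximum key $r$; let $i$ be the last node of $P$; if $i=d$, return $P$; otherwise, for every $j$ with $(i,j)\in E$ and $j\notin P$, insert the entry $\big(\sum_{t=0}^{T}(q\ast p_{ij})(t)\,u_j(T-t),\ (q\ast p_{ij},\ P\,\|\,[j])\big)$, where $\ast$ is convolution and $\|$ is concatenation. If $Q$ becomes empty, return nil. Then this procedure terminates, and if it returns a path $P$, then $P$ is a simple directed path from $s$ to $d$ that maximizes the on-time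 arrival probability $\Pr(\text{travel time along }P\le T)=\sum_{t=0}^{T} q^P(t)$ over all simple directed paths from $s$ to $d$.
   Context: This is the path-based stochastic on-time arrival (SOTA) problem: find a fixed route from $s$ to $d$ maximizing the probability that the total travel time (sum of independent edge travel times) does not exceed the budget $T$. The functions $u_i$ are the on-time arrival probabilities of the optimal adaptive routing policy (where the next edge may depend on the remaining budget), and $r^P(T)$ is the arrival probability obtained by following the fixed path $P$ to its last node $i$ and then following the optimal policy. Time is discretized in integer units. *)

(* Defs.v *)
From HB Require Import structures.
From mathcomp Require Import all_boot all_order all_algebra.
From mathcomp Require Import all_classical all_reals all_analysis.
From Stdlib Require List.
Set Implicit Arguments. Unset Strict Implicit. Unset Printing Implicit Defensive.
Import Order.TTheory GRing.Theory Num.Theory.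
Import numFieldNormedType.Exports.
Local Open Scope classical_set_scope.
Local Open Scope ring_scope.

Section SOTA.
Variables (R : realType) (V : finType).

Definition is_pmf_pos (f : nat -> R) : Prop :=
  [/\ (forall t, 0 <= f t), f 0%N = 0 &
      (fun n : nat => \sum_(0 <= k < n) f k) @ \oo --> (1 : R)].

(* delta_ij = min { t : p_ij(t) > 0 } (0 if no such t, which the pmf hypotheses exclude) *)
Definition delta (f : nat -> R) : nat :=
  match pselect (exists t : nat, (fun t => 0 < f t) t) with
  | left h => ex_minn h
  | right _ => 0%N
  end.

Definition conv (f g : nat -> R) : nat -> R :=
  fun t => \sum_(k < t.+1) f k * g (t - k)%N.

Definition dirac0 : nat -> R := fun t => if t == 0%N then 1 else 0.

Definition u_edge (p : V -> V -> nat -> R) (u : V -> nat -> R) (i j : V) (t : nat) : R :=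
  \sum_(delta (p i j) <= tau < t.+1) u j (t - tau)%N * p i j tau.

Definition is_opt_policy (E : rel V) (p : V -> V -> nat -> R) (d : V) (T : nat)
    (u : V -> nat -> R) : Prop :=
  (forall t, (t <= T)%N -> u d t = 1) /\
  (forall i, i != d -> forall t, (t <= T)%N ->
     u i t = \big[Num.max/0]_(j | E i j) u_edge p u i j t).

(* distribution of the travel time along the path x :: ps, starting from accumulated q *)
Fixpoint pathdist (p : V -> V -> nat -> R) (q : nat -> R) (x : V) (ps : seq V) : nat -> R :=
  match ps with
  | [::] => q
  | y :: ps' => pathdist p (conv q (p x y)) y ps'
  end.

Definition qP (p : V -> V -> nat -> R) (P : seq V) : nat -> R :=
  match P with
  | [::] => dirac0
  | x :: ps => pathdist p dirac0 x ps
  end.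

Definition on_time_prob (p : V -> V -> nat -> R) (T : nat) (P : seq V) : R :=
  \sum_(t < T.+1) qP p P t.

Definition simple_path (E : rel V) (s d : V) (P : seq V) : bool :=
  [&& P == s :: behead P, path E s (behead P), uniq P & last s (behead P) == d].

Definition entry := (R * ((nat -> R) * seq V))%type.

Inductive state := Running of seq entry | Finished of option (seq V).


Definition new_entry (p : V -> V -> nat -> R) (u : V -> nat -> R) (T : nat)
    (q : nat -> R) (P : seq V) (i j : V) : entry :=
  let q' := conv q (p i j) in
  (\sum_(t < T.+1) q' t * u j (T - t)%N, (q', rcons P j)).

Definition successors (E : rel V) (p : V -> V -> nat -> R) (u : V -> nat -> R) (T : nat)
    (s : V) (q : nat -> R) (P : seq V) : seq entry :=
  let i := last s P in
  [seq new_entry p u T q P i j | j <- enum V & E i j && (j \notin P)].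

Inductive bfs_step (E : rel V) (p : V -> V -> nat -> R) (u : V -> nat -> R) (T : nat)
    (s d : V) : state -> state -> Prop :=
  | step_empty : bfs_step E p u T s d (Running [::]) (Finished None)
  | step_found : forall Q1 Q2 (e : entry),
      (forall e', List.In e' (Q1 ++ Q2) -> e'.1 <= e.1) ->
      last s e.2.2 = d ->
      bfs_step E p u T s d (Running (Q1 ++ e :: Q2)) (Finished (Some e.2.2))
  | step_expand : forall Q1 Q2 (e : entry),
      (forall e', List.In e' (Q1 ++ Q2) -> e'.1 <= e.1) ->
      last s e.2.2 <> d ->
      bfs_step E p u T s d (Running (Q1 ++ e :: Q2))
        (Running (Q1 ++ Q2 ++ successors E p u T s e.2.1 e.2.2)).

Definition bfs_init (u : V -> nat -> R) (T : nat) (s : V) : state :=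
  Running [:: (u s T, (dirac0, [:: s]))].

Inductive reach (step : state -> state -> Prop) : state -> state -> Prop :=
  | reach_refl : forall x, reach step x x
  | reach_step : forall x y z, step x y -> reach step y z -> reach step x z.

End SOTA.
Arguments Running {R V}.
Arguments Finished {R V}.

(* Main.v *)
Require Import Defs.
From HB Require Import structures.
From mathcomp Require Import all_boot all_order all_algebra.
From mathcomp Require Import all_classical all_reals all_analysis.
From mathcomp Require Import zify.
Import Order.TTheory GRing.Theory Num.Theory.
Local Open Scope ring_scope.

Section S.
Variable R : realType.

Lemma delta_zero {f : nat -> R} : (forall t, 0 <= f t) -> forall x, (x < delta f)%N -> f x = 0.
Proof.
move=> f0 x; rewrite /delta; case: pselect => [h|_] //.
case: ex_minnP => m Pm Hm xm.
apply/eqP; rewrite eq_le f0 andbT leNgt; apply/negP => hx.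
by have := Hm x hx; rewrite leqNgt xm.
Qed.

Lemma sum_from_delta (f F : nat -> R) n : (forall t, 0 <= f t) ->
  \sum_(delta f <= x < n) F x * f x = \sum_(0 <= x < n) F x * f x.
Proof.
move=> f0; case: (leqP (delta f) n) => h.
  rewrite (big_cat_nat (leq0n (delta f)) h) /= [X in _ = X + _]big1_seq ?add0r //.
  by move=> i; rewrite mem_index_iota => /andP[_ /(delta_zero f0) ->]; rewrite mulr0.
rewrite big_geq ?(ltnW h) // big1_seq // => i; rewrite mem_index_iota => /andP[_ hi].
by rewrite (delta_zero f0) ?mulr0 // (ltn_trans hi h).
Qed.

Lemma exch (g : nat -> nat -> R) N :
  \sum_(t < N.+1) \sum_(0 <= x < (N - t).+1) g t x =
  \sum_(m < N.+1) \sum_(k < m.+1) g k (m - k)%N.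
Proof.
elim: N g => [|N IH] g.
  by rewrite !big_ord1 /= big_nat1.
rewrite big_ord_recr /= subnn big_nat1.
rewrite [RHS]big_ord_recr /= -IH.
have -> : \sum_(i < N.+1) \sum_(0 <= x < (N.+1 - i).+1) g i x =
   \sum_(i < N.+1) (\sum_(0 <= x < (N - i).+1) g i x + g i (N.+1 - i)%N).
  apply: eq_bigr => i _; rewrite big_nat_recr //= subSn //; by rewrite -ltnS.
rewrite big_split /= -addrA; congr (_ + _).
by rewrite [RHS]big_ord_recr /= subnn.
Qed.

Variables (V : finType) (E : rel V) (d : V) (T : nat)
    (p : V -> V -> nat -> R) (u : V -> nat -> R)
    (hp : forall i j, E i j -> is_pmf_pos (p i j))
    (hu : is_opt_policy E p d T u).

Lemma p_ge0 {x y} : E x y -> forall t, 0 <= p x y t.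
Proof. by move=> /hp [h _ _]. Qed.

Lemma step_bound (q : nat -> R) x y : (forall t, 0 <= q t) -> x != d -> E x y ->
  \sum_(t < T.+1) Defs.conv q (p x y) t * u y (T - t)%N <= \sum_(t < T.+1) q t * u x (T - t)%N.
Proof.
move=> q0 xd Exy; have p0 := p_ge0 Exy.
have -> : \sum_(t < T.+1) Defs.conv q (p x y) t * u y (T - t)%N =
   \sum_(m < T.+1) \sum_(k < m.+1) (fun k z => q k * (p x y z * u y (T - k - z)%N)) k (m - k)%N.
  apply: eq_bigr => m _; rewrite /Defs.conv mulr_suml; apply: eq_bigr => k _ /=.
  have km : (k <= m)%N by rewrite -ltnS.
  have mT : (m <= T)%N by rewrite -ltnS.
  rewrite mulrA; congr (_ * u y _); lia.
rewrite -(exch (fun k z => q k * (p x y z * u y (T - k - z)%N))); apply: ler_sum => t _; rewrite -mulr_sumr; apply: ler_wpM2l; first exact: q0.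
have tT : (T - t <= T)%N by apply: leq_subr.
rewrite (hu.2 x xd _ tT).
apply: le_trans (le_bigmax_cond _ _ Exy); rewrite /u_edge sum_from_delta //.
by under eq_bigr do rewrite mulrC.
Qed.

Lemma conv_ge0 (f g : nat -> R) : (forall t, 0 <= f t) -> (forall t, 0 <= g t) ->
  forall t, 0 <= Defs.conv f g t.
Proof. by move=> f0 g0 t; apply: sumr_ge0 => k _; apply: mulr_ge0. Qed.

Lemma pathdist_cat q x ps1 ps2 :
  pathdist p q x (ps1 ++ ps2) = pathdist p (pathdist p q x ps1) (last x ps1) ps2.
Proof. by elim: ps1 q x => [|y ps1 IH] q x //=. Qed.

Lemma pathdist_rcons q x ps j :
  pathdist p q x (rcons ps j) = Defs.conv (pathdist p q x ps) (p (last x ps) j).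
Proof. by rewrite -cats1 pathdist_cat. Qed.

Lemma pathdist_ge0 q x ps : (forall t, 0 <= q t) -> path E x ps ->
  forall t, 0 <= pathdist p q x ps t.
Proof.
elim: ps q x => [|y ps IH] q x q0 //= /andP[Exy hps].
by apply: IH => //; apply: conv_ge0 => //; apply: p_ge0.
Qed.

Lemma suffix_bound ps x q : (forall t, 0 <= q t) -> path E x ps -> last x ps = d ->
  uniq (x :: ps) ->
  \sum_(t < T.+1) pathdist p q x ps t <= \sum_(t < T.+1) q t * u x (T - t)%N.
Proof.
elim: ps x q => [|y ps IH] x q q0 /=.
  move=> _ xd _; apply: ler_sum => t _.
  by rewrite xd hu.1 ?mulr1 // leq_subr.
move=> /andP[Exy hps] hl /andP[xn un].
have xd : x != d by apply/eqP => xd; move: xn; rewrite xd -hl mem_last.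
apply: (le_trans _ (step_bound _ _ _ q0 xd Exy)).
apply: IH => //; apply: conv_ge0 => //; exact: p_ge0.
Qed.

Variable s : V.

Lemma In_mem (X : eqType) (x : X) l : List.In x l <-> x \in l.
Proof.
elim: l => [|y l IH] //=; rewrite in_cons; split.
  by case=> [->|/IH ->]; rewrite ?eqxx ?orbT.
by case/orP => [/eqP ->|/IH]; [left|right].
Qed.

Lemma In_mid (X : Type) (x e : X) Q1 Q2 :
  List.In x (Q1 ++ e :: Q2) -> x = e \/ List.In x (Q1 ++ Q2).
Proof.
rewrite !List.in_app_iff /=; case=> [h|[h|h]]; by [right; left | left | right; right].
Qed.

Arguments In_mid {X x e Q1 Q2}.

Definition EI (e : entry R V) : Prop :=
  exists ps, [/\ e.2.2 = s :: ps, path E s ps, uniq (s :: ps),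
    e.2.1 = pathdist p (Defs.dirac0 R) s ps &
    e.1 = \sum_(t < T.+1) e.2.1 t * u (last s ps) (T - t)%N].

Definition PI (Q : seq (entry R V)) : Prop :=
  forall ps', path E s ps' -> uniq (s :: ps') -> last s ps' = d ->
  exists e, List.In e Q /\ exists ps1 ps2, ps' = ps1 ++ ps2 /\ e.2.2 = s :: ps1.

Definition Inv (st : state R V) : Prop :=
  match st with
  | Running Q => (forall e, List.In e Q -> EI e) /\ PI Q
  | Finished None => True
  | Finished (Some P) => simple_path E s d P /\
      (forall P', simple_path E s d P' -> on_time_prob p T P' <= on_time_prob p T P)
  end.

Lemma dirac0_ge0 t : 0 <= (Defs.dirac0 R) t.
Proof. by rewrite /Defs.dirac0; case: eqP. Qed.

Lemma Inv_init : Inv (bfs_init u T s).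
Proof.
split.
  move=> e [<-|//]; exists [::]; split => //=.
  rewrite big_ord_recl /= big1 ?addr0 /Defs.dirac0 /= ?mul1r ?subn0 // => i _.
  by rewrite mul0r.
move=> ps' _ _ _; exists (u s T, (Defs.dirac0 R, [:: s])); split; first by left.
by exists [::], ps'.
Qed.


Lemma uniq_suffix (x : V) (ps1 ps2 : seq V) : uniq (x :: ps1 ++ ps2) -> uniq (last x ps1 :: ps2).
Proof.
rewrite -cat_cons cat_uniq => /and3P[_ hdis u2]; rewrite cons_uniq u2 andbT.
apply/negP => hin; move/negP: hdis; apply; apply/hasP; exists (last x ps1) => //.
exact: mem_last.
Qed.

Lemma Inv_found Q1 Q2 e :
  (forall e', List.In e' (Q1 ++ Q2) -> e'.1 <= e.1) -> last s e.2.2 = d ->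
  Inv (Running (Q1 ++ e :: Q2)) -> Inv (Finished (Some e.2.2)).
Proof.
move=> hmax hl [hEI hPI].
have ine : List.In e (Q1 ++ e :: Q2) by apply: List.in_or_app; right; left.
have [ps [e2 hpath huniq e1 ekey]] := hEI e ine.
rewrite e2 /= in hl.
split.
  by rewrite e2 /simple_path; apply/and4P; split; [rewrite /= eqxx | | | rewrite /= hl].
move=> [|x ps'] /and4P[/eqP // [->] hpath' hu' /eqP hl'].
rewrite /= in hpath' hl'.
have [e' [ine' [ps1 [ps2 [hps' e'2]]]]] := hPI _ hpath' hu' hl'.
have [ps1' [e'2' hpath1 hu1 e'1 e'key]] := hEI e' ine'.
rewrite e'2 in e'2'; case: e'2' => ?; subst ps1'.
have le' : e'.1 <= e.1 by case: (In_mid ine') => [->|/hmax].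
rewrite e2 /on_time_prob /= hps' pathdist_cat.
apply: le_trans (suffix_bound _ _ _ _ _ _ _) _.
- exact: (pathdist_ge0 _ _ _ dirac0_ge0 hpath1).
- by move: hpath'; rewrite hps' cat_path => /andP[].
- by rewrite -last_cat -hps'.
- by apply: uniq_suffix; rewrite -hps'.
rewrite -e'1 -e'key (le_trans le') // ekey e1 hl.
by apply: ler_sum => t _; rewrite hu.1 ?mulr1 // leq_subr.
Qed.

Lemma Inv_expand Q1 Q2 e : last s e.2.2 <> d ->
  Inv (Running (Q1 ++ e :: Q2)) ->
  Inv (Running (Q1 ++ Q2 ++ successors E p u T s e.2.1 e.2.2)).
Proof.
move=> hl [hEI hPI].
have ine : List.In e (Q1 ++ e :: Q2) by apply: List.in_or_app; right; left.
have [ps [e2 hpath huniq e1 ekey]] := hEI e ine.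
have hsucc : forall e', List.In e' (successors E p u T s e.2.1 e.2.2) ->
    exists j, [/\ E (last s ps) j, j \notin s :: ps &
      e' = new_entry p u T e.2.1 e.2.2 (last s ps) j].
  move=> e'; rewrite /successors e2 /= => /List.in_map_iff [j [<- /In_mem]].
  by rewrite mem_filter => /andP[/andP[Ej jn] _]; exists j.
split.
  move=> e' /List.in_app_iff [h|/List.in_app_iff [h|h]].
  - by apply: hEI; apply: List.in_or_app; left.
  - by apply: hEI; apply: List.in_or_app; right; right.
  have [j [Ej jn ->]] := hsucc e' h; exists (rcons ps j); split => /=.
  - by rewrite e2.
  - by rewrite rcons_path hpath Ej.
  - by rewrite -cons_uniq -rcons_cons rcons_uniq jn huniq.
  - by rewrite pathdist_rcons e1.
  - by rewrite last_rcons.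
move=> ps' hp' hu' hl'.
have [e' [ine' [ps1 [ps2 [hps' e'2]]]]] := hPI _ hp' hu' hl'.
case: (In_mid ine') => [ee|hin]; last first.
  exists e'; split; last by exists ps1, ps2.
  by move/List.in_app_iff: hin => [h|h]; apply/List.in_app_iff; [left|right; apply/List.in_app_iff; left].
subst e'; rewrite e2 in e'2; case: e'2 => ?; subst ps1.
case: ps2 hps' => [|j ps3] hps'.
  by exfalso; apply: hl; rewrite e2 /= -hl' hps' cats0.
have Ej : E (last s ps) j by move: hp'; rewrite hps' cat_path /= => /and3P[].
have jn : j \notin s :: ps.
  move: hu'; rewrite hps' -cat_cons cat_uniq => /and3P[_ hdis _].
  apply/negP => hj; move/negP: hdis; apply; apply/hasP; exists j => //.
  exact: mem_head.
exists (new_entry p u T e.2.1 e.2.2 (last s ps) j); split.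
  apply/List.in_app_iff; right; apply/List.in_app_iff; right.
  rewrite /successors e2 /=; apply: List.in_map; apply/In_mem.
  by rewrite mem_filter Ej jn mem_enum.
by exists (rcons ps j), ps3; rewrite /= e2 cat_rcons.
Qed.

Lemma Inv_step st st' : bfs_step E p u T s d st st' -> Inv st -> Inv st'.
Proof.
case => [|Q1 Q2 e hmax hl|Q1 Q2 e hmax hl] //.
  exact: Inv_found.
exact: Inv_expand.
Qed.

Lemma reach_Inv st st' : reach (bfs_step E p u T s d) st st' -> Inv st -> Inv st'.
Proof. by elim => // x y z hs _ IH hI; apply: IH; apply: Inv_step hs hI. Qed.

Lemma maxdec (Q : seq (entry R V)) : Q <> [::] -> exists Q1 e Q2,
  Q = Q1 ++ e :: Q2 /\ forall e', List.In e' (Q1 ++ Q2) -> e'.1 <= e.1.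
Proof.
elim: Q => [//|a Q IH] _; case: Q IH => [|b Q] IH.
  by exists [::], a, [::]; split.
have [Q1 [e [Q2 [hQ hm]]]] := IH ltac:(by []).
have [h|h] := leP a.1 e.1.
  exists (a :: Q1), e, Q2; split; first exact: (congr1 (cons a) hQ).
  by move=> e' /= [<-|h'] //; apply: hm.
exists [::], a, (b :: Q); split => // e' h'.
have : List.In e' (Q1 ++ e :: Q2) by rewrite -hQ.
case/In_mid => [->|/hm h2]; first exact: ltW.
exact: le_trans h2 (ltW h).
Qed.

Lemma progress st : (exists st', bfs_step E p u T s d st st') \/ (exists o, st = Finished o).
Proof.
case: st => [Q|o]; last by right; exists o.
left; case: Q => [|a Q]; first by exists (Finished None); constructor.
have [Q1 [e [Q2 [-> hmax]]]] := maxdec (a :: Q) ltac:(by []).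
case: (eqVneq (last s e.2.2) d) => h.
  by eexists; apply: step_found.
by eexists; apply: step_expand => //; apply/eqP.
Qed.

Definition K := #|V|.
Definition w (e : entry R V) : nat := K.+1 ^ (K - size e.2.2).
Definition meas (st : state R V) : nat :=
  match st with Running Q => sumn (map w Q) | Finished _ => 0 end.

Lemma EI_size e : EI e -> (size e.2.2 <= K)%N.
Proof.
case=> ps [e2 _ hu' _ _]; rewrite e2; move/card_uniqP: hu' => <-.
exact: max_card.
Qed.

Lemma succ_path e' q P : List.In e' (successors E p u T s q P) ->
  exists j, e'.2.2 = rcons P j.
Proof. by rewrite /successors => /List.in_map_iff [j [<- _]]; exists j. Qed.

Arguments succ_path {e' q P}.

Lemma sumn_const (l : seq (entry R V)) c : (forall x, List.In x l -> w x = c) ->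
  sumn (map w l) = (size l * c)%N.
Proof.
elim: l => [|x l IH] //= h; rewrite IH ?h; [|by left|by move=> y hy; apply: h; right].
by rewrite mulSn.
Qed.

Lemma size_succ q P : (size (successors E p u T s q P) <= K)%N.
Proof.
rewrite /successors size_map size_filter /K cardE.
exact: count_size.
Qed.

Lemma meas_dec Q1 Q2 e : last s e.2.2 <> d -> Inv (Running (Q1 ++ e :: Q2)) ->
  (meas (Running (Q1 ++ Q2 ++ successors E p u T s e.2.1 e.2.2)) <
   meas (Running (Q1 ++ e :: Q2)))%N.
Proof.
move=> hl hI; have [hEI _] := Inv_expand _ _ _ hl hI.
rewrite /meas !map_cat !sumn_cat /= ltn_add2l (addnC (w e)) ltn_add2l.
set S := successors _ _ _ _ _ _ _.
set n := size e.2.2.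
rewrite (@sumn_const S (K.+1 ^ (K - n.+1))); last first.
  move=> x hx; have [j hj] := succ_path hx; by rewrite /w hj size_rcons.
have hsz : (size S <= K)%N by apply: size_succ.
have hn : (size S == 0%N) || (n < K)%N.
  case E0: S => [|x S'] //=.
  have hx : List.In x S by rewrite E0; left.
  have [j hj] := succ_path hx.
  have hx' : List.In x (Q1 ++ Q2 ++ S) by apply/List.in_app_iff; right; apply/List.in_app_iff; right.
  by have := EI_size _ (hEI x hx'); rewrite hj size_rcons.
have c0 : (0 < K.+1 ^ (K - n.+1))%N by rewrite expn_gt0.
case/orP: hn => [/eqP ->|hn]; first by rewrite mul0n expn_gt0.
rewrite /w -/n.
have -> : (K - n = (K - n.+1).+1)%N by lia.
rewrite expnS ltn_pmul2r //.
Qed.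

Lemma acc_fin o : Acc (fun y x => bfs_step E p u T s d x y) (Finished o).
Proof. by constructor => y h; inversion h. Qed.

Lemma acc_meas n : forall st, Inv st -> (meas st < n)%N ->
  Acc (fun y x => bfs_step E p u T s d x y) st.
Proof.
elim: n => [|n IH] st hI hm; first by rewrite ltn0 in hm.
constructor => st' hstep; move: hI hm; case: hstep => [|Q1 Q2 e hmax hl|Q1 Q2 e hmax hl] hI hm.
- exact: acc_fin.
- exact: acc_fin.
apply: IH; first exact: Inv_expand.
by rewrite -ltnS; apply: leq_trans hm; apply: meas_dec.
Qed.

End S.

Theorem mainTheorem1 (R : realType) (V : finType) (E : rel V) (s d : V) (T : nat)
    (p : V -> V -> nat -> R) (u : V -> nat -> R)
    (hp : forall i j, E i j -> is_pmf_pos (p i j))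
    (hu : is_opt_policy E p d T u) :
  (* termination: every run is finite, and every non-finished reachable state can step *)
  Acc (fun y x => bfs_step E p u T s d x y) (bfs_init u T s) /\
  (forall st, reach (bfs_step E p u T s d) (bfs_init u T s) st ->
     (exists st', bfs_step E p u T s d st st') \/ (exists o, st = Finished o)) /\
  (* correctness of a returned path *)
  (forall P, reach (bfs_step E p u T s d) (bfs_init u T s) (Finished (Some P)) ->
     simple_path E s d P /\
     (forall P', simple_path E s d P' -> on_time_prob p T P' <= on_time_prob p T P)).
Proof.
split.
  have h := @acc_meas R V E d T p u s (meas R V (bfs_init u T s)).+1 (bfs_init u T s) (Inv_init _ _ _ _ _ _ _ _) (ltnSn _).
  exact h.
split; first by move=> st _; apply: progress.
move=> P hr; exact: (@reach_Inv R V E d T p u hp hu s _ _ hr (Inv_init _ _ _ _ _ _ _ _)).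
Qed.
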